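(* Let $U=\sum_{j=0}^3c_j\sigma_j\otimes\sigma_j$ be a normalized two-qubit unitary with parameters $x=\pi/4$ and $y=z$. Write $E(\alpha,\beta):=E(\varphi(\alpha,\beta;\frac{\pi}{2},\frac{\pi}{2}))$. Then $$\max_{\alpha\in[0,\pi/4],\ \beta\in[0,\pi/2]}E(\alpha,\beta)=E(\tfrac{\pi}{4},\tfrac{\pi}{4})=H(|c_0|^2,|c_0|^2,|c_2|^2,|c_2|^2).$$
   Context: Pauli matrices: $\sigma_0=I$, $\sigma_1=\begin{pmatrix}0&1\\1&0\end{pmatrix}$, $\sigma_2=\begin{pmatrix}0&-i\\i&0\end{pmatrix}$, $\sigma_3=\begin{pmatrix}1&0\\0&-1\end{pmatrix}$. For real $x,y,z$ set $c_0=\cos x\cos y\cos z+i\sin x\sin y\sin z$, $c_1=\cos x\sin y\sin z+i\sin x\cos y\cos z$, $c_2=\sin x\cos y\sin z+i\cos x\sin y\cos z$, $c_3=\sin x\sin y\cos z+i\cos x\cos y\sin z$, and $U=\sum_{j=0}^3c_j\sigma_j\otimes\sigma_j$ acting on qubits $A,B$. $U$ is called normalized if $\pi/4\ge x\ge y\ge z\ge0$ and $0<y<\pi/4$. $E(\varphi(\alpha,\beta;\frac{\pi}{2},\frac{\pi}{2}))$ denotes the entanglement entropy $S(\mathrm{Tr}_{AR_A}|\chi\rangle\langle\chi|)$ (von Neumann entropy, base-2 logarithm) of $|\chi\rangle=U\big((\cos\alpha|00\rangle+\sin\alpha|11\rangle)_{AR_A}\otimes(\cos\beta|00\rangle+\sin\beta|11\rangle)_{BR_B}\big)$,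 with $R_A,R_B$ qubits. $H$ is the base-2 Shannon entropy. *)

(* Defs.v *)
From HB Require Import structures.
From mathcomp Require Import all_boot all_order all_algebra.
From mathcomp Require Import all_classical all_reals all_analysis.
From mathcomp Require Import complex.
From Stdlib Require Import ClassicalEpsilon.

Set Implicit Arguments.
Unset Strict Implicit.
Unset Printing Implicit Defensive.

Import Order.TTheory GRing.Theory Num.Theory.
Local Open Scope ring_scope.

Section QDefs.
Variable R : realType.
Local Notation C := R[i].

Definition pauli (j : 'I_4) : 'M[C]_2 :=
  \matrix_(r < 2, s < 2)
   match nat_of_ord j with
   | 0 => if r == s then 1 else 0
   | 1 => if r != s then 1 else 0
   | 2 => if r == s then 0 else if r == 0 :> nat then Complex 0 (-1) else Complex 0 1
   | _ => if r == s then (if r == 0 :> nat then 1 else -1) else 0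
   end.

Definition coef_c (x y z : R) (j : 'I_4) : C :=
  match nat_of_ord j with
  | 0 => Complex (cos x * cos y * cos z) (sin x * sin y * sin z)
  | 1 => Complex (cos x * sin y * sin z) (sin x * cos y * cos z)
  | 2 => Complex (sin x * cos y * sin z) (cos x * sin y * cos z)
  | _ => Complex (sin x * sin y * cos z) (cos x * cos y * sin z)
  end.

(* matrix element <a' b'| U |a b> of U = sum_j c_j sigma_j (x) sigma_j,
   first tensor factor on qubit A, second on qubit B *)
Definition Uel (x y z : R) (a' b' a b : 'I_2) : C :=
  \sum_(j < 4) coef_c x y z j * pauli j a' a * pauli j b' b.

(* coefficients of cos t |00> + sin t |11> *)
Definition phi2 (t : R) (i k : 'I_2) : C :=
  if i == k then (if i == 0 :> nat then Complex (cos t) 0 else Complex (sin t) 0) else 0.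

(* amplitude <a, rA, b, rB | chi> of
   chi = U ((cos al|00>+sin al|11>)_{A RA} (x) (cos be|00>+sin be|11>)_{B RB}) *)
Definition chi (x y z al be : R) (a rA b rB : 'I_2) : C :=
  \sum_(a0 < 2) \sum_(b0 < 2) Uel x y z a b a0 b0 * phi2 al a0 rA * phi2 be b0 rB.

(* index i : 'I_4 of the A RA system encodes (a, rA) = (i / 2, i mod 2) *)
Definition hi (i : 'I_4) : 'I_2 := inord (i %/ 2).
Definition lo (i : 'I_4) : 'I_2 := inord (i %% 2).

(* reduced density matrix Tr_{B RB} |chi><chi| on A RA *)
Definition rhoA (x y z al be : R) : 'M[C]_4 :=
  \matrix_(i < 4, k < 4)
    \sum_(b < 2) \sum_(rB < 2)
      chi x y z al be (hi i) (lo i) b rB * conjc (chi x y z al be (hi k) (lo k) b rB).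

Definition eta (t : R) : R := if 0 < t then - (t * ln t / ln 2) else 0.

Definition spectrum n (M : 'M[C]_n) : seq C :=
  epsilon (inhabits [::])
    (fun rs : seq C => char_poly M = \prod_(l <- rs) ('X - l%:P)).

(* von Neumann entropy, base 2 (eigenvalues of a density matrix are real) *)
Definition vN_entropy n (M : 'M[C]_n) : R :=
  \sum_(l <- spectrum M) eta (complex.Re l).

Definition shannon (p : seq R) : R := \sum_(t <- p) eta t.

Definition Ent (x y z al be : R) : R := vN_entropy (rhoA x y z al be).

Definition normalized (x y z : R) : Prop :=
  pi / 4 >= x /\ x >= y /\ y >= z /\ z >= 0 /\ 0 < y /\ y < pi / 4.

End QDefs.

(* Main.v *)
From Pilot Require Import Defs.
From HB Require Import structures.
From mathcomp Require Import all_boot all_order all_algebra.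
From mathcomp Require Import all_classical all_reals all_analysis.
From mathcomp Require Import complex.
From mathcomp Require Import ring lra.
From Stdlib Require Import ClassicalEpsilon.
Import Order.TTheory GRing.Theory Num.Theory.
Local Open Scope ring_scope.

Module Aux.
Local Open Scope complex_scope.
Set Implicit Arguments. Unset Strict Implicit. Unset Printing Implicit Defensive.
Local Notation etaD := Pilot.Defs.eta.

Definition Utab (R : realType) (x y : R) (a b a0 b0 : nat) : R[i] :=
  let c0 := Complex (cos x * cos y * cos y) (sin x * sin y * sin y) in
  let c1 := Complex (cos x * sin y * sin y) (sin x * cos y * cos y) in
  let c2 := Complex (sin x * cos y * sin y) (cos x * sin y * cos y) in
  let c3 := Complex (sin x * sin y * cos y) (cos x * cos y * sin y) in
  match a, b, a0, b0 with
  | 0, 0, 0, 0 => c0 + c3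
  | 1, 1, 0, 0 => c1 - c2
  | 0, 1, 0, 1 => c0 - c3
  | 1, 0, 0, 1 => c1 + c2
  | 1, 0, 1, 0 => c0 - c3
  | 0, 1, 1, 0 => c1 + c2
  | 1, 1, 1, 1 => c0 + c3
  | 0, 0, 1, 1 => c1 - c2
  | _, _, _, _ => 0
  end.

Lemma c1E (R : realType) : (1 : R[i]) = Complex 1 0. Proof. by []. Qed.
Lemma c0E (R : realType) : (0 : R[i]) = Complex 0 0. Proof. by []. Qed.
Lemma cN1E (R : realType) : (-1 : R[i]) = Complex (-1) 0.
Proof. by apply/eqP; rewrite eq_complex /= oppr0 !eqxx. Qed.

Lemma Uel_tab (R : realType) (x y : R) (a b a0 b0 : 'I_2) :
  Uel x y y a b a0 b0 = Utab x y a b a0 b0.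
Proof.
rewrite /Uel !big_ord_recr big_ord0 /= !mxE /=.
case: a => [[|[|//]] ?]; case: b => [[|[|//]] ?];
case: a0 => [[|[|//]] ?]; case: b0 => [[|[|//]] ?] => /=;
rewrite ?c1E ?c0E ?cN1E; simpc; congr Complex; ring.
Qed.

Definition ph (R : realType) (t : R) (n : nat) : R[i] :=
  if n == 0%N then Complex (cos t) 0 else Complex (sin t) 0.

Definition chiN (R : realType) (x y al be : R) (a rA b rB : nat) : R[i] :=
  Utab x y a b rA rB * ph al rA * ph be rB.

Lemma chiE (R : realType) (x y al be : R) (a rA b rB : 'I_2) :
  chi x y y al be a rA b rB = chiN x y al be a rA b rB.
Proof.
rewrite /chi /chiN !big_ord_recr !big_ord0 /= !Uel_tab /phi2 /ph.
case: rA => [[|[|//]] ?]; case: rB => [[|[|//]] ?] /=;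
rewrite ?mulr0 ?mul0r ?addr0 ?add0r.
all: reflexivity.

Qed.

Lemma rhoE (R : realType) (x y al be : R) (i k : nat) : (i < 4)%N -> (k < 4)%N ->
  rhoA x y y al be (inord i) (inord k) =
  \sum_(b < 2) \sum_(rB < 2) chiN x y al be (i %/ 2) (i %% 2) b rB *
      conjc (chiN x y al be (k %/ 2) (k %% 2) b rB).
Proof.
move=> hi4 hk4; rewrite mxE; apply: eq_bigr => b _; apply: eq_bigr => rB _.
rewrite !chiE /hi /lo !inordK //.
- by rewrite ltn_mod.
- by rewrite ltn_divLR.
- by rewrite ltn_mod.
- by rewrite ltn_divLR.
Qed.

Definition t1f (R : realType) (x y al be : R) : R :=
  let k := cos x in let C := cos y in let S := sin y in
  let ca := cos al in let sa := sin al in let cb := cos be in let sb := sin be in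
  k^+2 * (C+S)^+2 * (C^+2+S^+2) * (ca^+2*cb^+2 + sa^+2*sb^+2)
  + k^+2 * (C-S)^+2 * (C^+2+S^+2) * (ca^+2*sb^+2 + sa^+2*cb^+2).
Definition t2f (R : realType) (x y al be : R) : R :=
  let k := cos x in let C := cos y in let S := sin y in
  let ca := cos al in let sa := sin al in let cb := cos be in let sb := sin be in
  k^+2 * (C+S)^+2 * (C^+2+S^+2) * (sa^+2*cb^+2 + ca^+2*sb^+2)
  + k^+2 * (C-S)^+2 * (C^+2+S^+2) * (sa^+2*sb^+2 + ca^+2*cb^+2).
Definition df (R : realType) (x y al be : R) : R :=
  let k := cos x in let C := cos y in let S := sin y in
  let ca := cos al in let sa := sin al in let cb := cos be in let sb := sin be in
  32 * k^+4 * (S^+2 * C^+2) * (C^+4 + S^+4) * (ca^+2 * sa^+2) * (cb^+2 * sb^+2).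

Ltac rcomp := rewrite rhoE // /chiN !big_ord_recr !big_ord0 /= /ph /=.

Lemma T1E (R : realType) (x y al be : R) : sin x = cos x ->
  rhoA x y y al be (inord 0) (inord 0) + rhoA x y y al be (inord 3) (inord 3)
  = Complex (t1f x y al be) 0.
Proof.
move=> hx; rcomp; rcomp; rewrite /t1f hx ?c0E; simpc; congr Complex; ring.
Qed.

Lemma D1E (R : realType) (x y al be : R) : sin x = cos x ->
  rhoA x y y al be (inord 0) (inord 0) * rhoA x y y al be (inord 3) (inord 3)
  - rhoA x y y al be (inord 0) (inord 3) * rhoA x y y al be (inord 3) (inord 0)
  = Complex (df x y al be) 0.
Proof.
move=> hx; rewrite !rhoE // /chiN !big_ord_recr !big_ord0 /= /ph /=.
rewrite /df hx ?c0E; simpc; congr Complex; ring.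
Qed.

Lemma T2E (R : realType) (x y al be : R) : sin x = cos x ->
  rhoA x y y al be (inord 1) (inord 1) + rhoA x y y al be (inord 2) (inord 2)
  = Complex (t2f x y al be) 0.
Proof.
move=> hx; rewrite !rhoE // /chiN !big_ord_recr !big_ord0 /= /ph /=.
rewrite /t2f hx ?c0E; simpc; congr Complex; ring.
Qed.

Lemma D2E (R : realType) (x y al be : R) : sin x = cos x ->
  rhoA x y y al be (inord 1) (inord 1) * rhoA x y y al be (inord 2) (inord 2)
  - rhoA x y y al be (inord 1) (inord 2) * rhoA x y y al be (inord 2) (inord 1)
  = Complex (df x y al be) 0.
Proof.
move=> hx; rewrite !rhoE // /chiN !big_ord_recr !big_ord0 /= /ph /=.
rewrite /df hx ?c0E; simpc; congr Complex; ring.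
Qed.

Lemma z01 (R : realType) (x y al be : R) : rhoA x y y al be (inord 0) (inord 1) = 0.
Proof. by rewrite rhoE // /chiN !big_ord_recr !big_ord0 /= /ph /= ?c0E; simpc; congr Complex; ring. Qed.
Lemma z02 (R : realType) (x y al be : R) : rhoA x y y al be (inord 0) (inord 2) = 0.
Proof. by rewrite rhoE // /chiN !big_ord_recr !big_ord0 /= /ph /= ?c0E; simpc; congr Complex; ring. Qed.
Lemma z31 (R : realType) (x y al be : R) : rhoA x y y al be (inord 3) (inord 1) = 0.
Proof. by rewrite rhoE // /chiN !big_ord_recr !big_ord0 /= /ph /= ?c0E; simpc; congr Complex; ring. Qed.
Lemma z32 (R : realType) (x y al be : R) : rhoA x y y al be (inord 3) (inord 2) = 0.
Proof. by rewrite rhoE // /chiN !big_ord_recr !big_ord0 /= /ph /= ?c0E; simpc; congr Complex; ring. Qed.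
Lemma z10 (R : realType) (x y al be : R) : rhoA x y y al be (inord 1) (inord 0) = 0.
Proof. by rewrite rhoE // /chiN !big_ord_recr !big_ord0 /= /ph /= ?c0E; simpc; congr Complex; ring. Qed.
Lemma z20 (R : realType) (x y al be : R) : rhoA x y y al be (inord 2) (inord 0) = 0.
Proof. by rewrite rhoE // /chiN !big_ord_recr !big_ord0 /= /ph /= ?c0E; simpc; congr Complex; ring. Qed.
Lemma z13 (R : realType) (x y al be : R) : rhoA x y y al be (inord 1) (inord 3) = 0.
Proof. by rewrite rhoE // /chiN !big_ord_recr !big_ord0 /= /ph /= ?c0E; simpc; congr Complex; ring. Qed.
Lemma z23 (R : realType) (x y al be : R) : rhoA x y y al be (inord 2) (inord 3) = 0.
Proof. by rewrite rhoE // /chiN !big_ord_recr !big_ord0 /= /ph /= ?c0E; simpc; congr Complex; ring. Qed.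

Lemma det4 (T : comRingType) (A : 'M[T]_4) (f : nat -> nat -> T) :
  (forall i j : 'I_4, A i j = f i j) ->
  f 0%N 1%N = 0 -> f 0%N 2%N = 0 -> f 3%N 1%N = 0 -> f 3%N 2%N = 0 ->
  f 1%N 0%N = 0 -> f 2%N 0%N = 0 -> f 1%N 3%N = 0 -> f 2%N 3%N = 0 ->
  \det A = (f 0%N 0%N * f 3%N 3%N - f 0%N 3%N * f 3%N 0%N) * (f 1%N 1%N * f 2%N 2%N - f 1%N 2%N * f 2%N 1%N).
Proof.
move=> hA h01 h02 h31 h32 h10 h20 h13 h23.
do 3! rewrite ?(expand_det_row _ ord0) /cofactor ?big_ord_recr ?big_ord0 /=.
rewrite !det_mx11 !mxE !hA /bump /=.
rewrite h01 h02 h31 h32 h10 h20 h13 h23.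
ring.
Qed.

Definition gN (R : realType) (x y al be : R) (i k : nat) : R[i] :=
  rhoA x y y al be (inord i) (inord k).

Lemma charpolyE (R : realType) (x y al be : R) :
  char_poly (rhoA x y y al be) =
  (('X - (gN x y al be 0 0)%:P) * ('X - (gN x y al be 3 3)%:P)
     - (gN x y al be 0 3)%:P * (gN x y al be 3 0)%:P) *
  (('X - (gN x y al be 1 1)%:P) * ('X - (gN x y al be 2 2)%:P)
     - (gN x y al be 1 2)%:P * (gN x y al be 2 1)%:P).
Proof.
pose f (i j : nat) : {poly R[i]} := 'X *+ (i == j)%N - (gN x y al be i j)%:P.
rewrite /char_poly (@det4 _ _ f).
- by rewrite /f /= !mulr1n !mulr0n !sub0r !mulrNN.
- by move=> i j; rewrite /f /gN !mxE !inord_val.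
all: by rewrite /f /gN /= mulr0n sub0r ?z01 ?z02 ?z31 ?z32 ?z10 ?z20 ?z13 ?z23 oppr0.
Qed.

Lemma quad (F : comRingType) (a b c d l1 l2 : F) :
  a + b = l1 + l2 -> a * b - c * d = l1 * l2 ->
  ('X - a%:P) * ('X - b%:P) - c%:P * d%:P = ('X - l1%:P) * ('X - l2%:P) :> {poly F}.
Proof.
move=> h1 h2.
have E1 : a%:P + b%:P = l1%:P + l2%:P :> {poly F} by rewrite -!polyCD h1.
have E2 : a%:P * b%:P - c%:P * d%:P = l1%:P * l2%:P :> {poly F}
  by rewrite -!polyCM -polyCB h2.
apply/eqP; rewrite -subr_eq0; apply/eqP.
have -> : ('X - a%:P) * ('X - b%:P) - c%:P * d%:P - ('X - l1%:P) * ('X - l2%:P) =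
   (l1%:P + l2%:P - (a%:P + b%:P)) * 'X + (a%:P * b%:P - c%:P * d%:P - l1%:P * l2%:P) :> {poly F}
  by ring.
by rewrite E1 E2 !subrr mul0r addr0.
Qed.

Lemma spectrum_perm (R : realType) n (M : 'M[R[i]]_n) (s : seq R[i]) :
  char_poly M = \prod_(l <- s) ('X - l%:P) -> perm_eq (spectrum M) s.
Proof.
move=> h; apply: prod_XsubC_eq; rewrite /spectrum.
have := @ClassicalEpsilon.epsilon_spec (seq R[i]) (inhabits [::])
  (fun rs : seq R[i] => char_poly M = \prod_(l <- rs) ('X - l%:P)) (ex_intro _ s h).
by move=> <-.
Qed.

Local Close Scope complex_scope.

Lemma core_ineq (R : realType) (u w d : R) :
  0 <= u <= 1 -> 0 <= w -> 4 * w^+2 <= 1 -> 0 <= 4 * d ->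
  4 * d <= 2 * w^+2 * (1 - 2 * w^+2) * (1 - u)^+2 ->
  0 <= (1/2 - u*w)^+2 - 4 * d /\
  1 - 4 * w^+2 <= Num.sqrt ((1/2 + u*w)^+2 - 4*d) + Num.sqrt ((1/2 - u*w)^+2 - 4*d).
Proof.
set W := w^+2.
move=> /andP[u0 u1] w0 w4 d0 dK.
have W0 : 0 <= W by rewrite /W sqr_ge0.
set K := 2 * W * (1 - 2 * W) * (1 - u)^+2.
set A1 := (1/2 + u*w)^+2 - K.
set A2 := (1/2 - u*w)^+2 - K.
have hf : A2 = (1-u)*(1/2-2*W)^+2 + u*(1/2-w)^+2 + W*(1-4*W)*u*(1-u).
  by rewrite /A2 /K /W; by field; rewrite ?pnatr_eq0.
have A2ge : 0 <= A2.
  rewrite hf; have h1 : 0 <= 1 - u by lra.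
  have h2 : 0 <= 1 - 4 * W by lra.
  apply: addr_ge0; [apply: addr_ge0|].
  - by apply: mulr_ge0 => //; apply: sqr_ge0.
  - by apply: mulr_ge0 => //; apply: sqr_ge0.
  - by apply: mulr_ge0 => //; apply: mulr_ge0 => //; apply: mulr_ge0.
have uw0 : 0 <= u * w by apply: mulr_ge0.
have w12 : w <= 1/2.
  have : w^+2 <= (1/2)^+2 by rewrite -/W [(1/2)^+2]expr2; lra.
  by rewrite ler_sqr ?nnegrE //; lra.
have uw12 : u * w <= 1/2.
  have : u * w <= 1 * w by apply: ler_wpM2r.
  lra.
have A1ge : A2 <= A1.
  by rewrite /A1 /A2 lerD2r ler_sqr ?nnegrE; lra.
have A1ge0 : 0 <= A1 := le_trans A2ge A1ge.
split; first by rewrite /A2 /K in A2ge; lra.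
set s1 := Num.sqrt A1; set s2 := Num.sqrt A2.
have s10 : 0 <= s1 := sqrtr_ge0 _.
have s20 : 0 <= s2 := sqrtr_ge0 _.
have s1E : s1 ^+ 2 = A1 by rewrite sqr_sqrtr.
have s2E : s2 ^+ 2 = A2 by rewrite sqr_sqrtr.
have le1 : s1 <= Num.sqrt ((1/2 + u*w)^+2 - 4*d).
  by apply: ler_wsqrtr; rewrite /A1 /K; lra.
have le2 : s2 <= Num.sqrt ((1/2 - u*w)^+2 - 4*d).
  by apply: ler_wsqrtr; rewrite /A2 /K; lra.
suff : 1 - 4 * W <= s1 + s2 by lra.
set m := 1 - 4 * W.
have m0 : 0 <= m by rewrite /m; lra.
suff hsq : m ^+ 2 <= (s1 + s2) ^+ 2.
  by rewrite -ler_sqr ?nnegrE //; lra.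
set Rh := m^+2 - (A1 + A2).
have hsum : (s1 + s2)^+2 = A1 + A2 + 2 * (s1 * s2) by rewrite -s1E -s2E; field; rewrite ?pnatr_eq0.
rewrite hsum.
have p0 : 0 <= s1 * s2 by apply: mulr_ge0.
case: (lerP Rh 0) => hR.
  by rewrite /Rh in hR; lra.
suff : Rh <= 2 * (s1 * s2) by rewrite /Rh; lra.
rewrite -[2 * (s1 * s2)]ger0_norm; last by lra.
rewrite -[Rh]ger0_norm; last by lra.
rewrite -ler_sqr ?nnegrE ?normr_ge0 // !real_normK ?num_real //.
have -> : (2 * (s1 * s2))^+2 = 4 * (A1 * A2) by rewrite -s1E -s2E; by field; rewrite ?pnatr_eq0.
set H := (1-u) * m^+3 + u * (6*W+8*W^+2-32*W^+3) + 4 * W * m * u * (1-u).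
have hH : 0 <= H.
  have h1 : 0 <= 1 - u by lra.
  have h3 : 0 <= 6*W+8*W^+2-32*W^+3.
    have -> : 6*W+8*W^+2-32*W^+3 = W * (6 + 8*W - 32*W^+2) by ring.
    apply: mulr_ge0 => //; nra.
  rewrite /H; apply: addr_ge0; [apply: addr_ge0|].
  - by apply: mulr_ge0 => //; apply: exprn_ge0.
  - by apply: mulr_ge0.
  - by apply: mulr_ge0 => //; apply: mulr_ge0 => //; apply: mulr_ge0 => //; apply: mulr_ge0.
have hF : 4 * (A1 * A2) - Rh^+2 = 8 * u * W * (2 * Rh + H).
  by rewrite /Rh /H /m /A1 /A2 /K /W; by field; rewrite ?pnatr_eq0.
have : 0 <= 8 * u * W * (2 * Rh + H).
  apply: mulr_ge0; first by apply: mulr_ge0 => //; apply: mulr_ge0.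
  lra.
lra.
Qed.

Lemma key_ineq (R : realType) (a b w : R) :
  -1 <= a <= 1 -> -1 <= b <= 1 -> 0 <= w -> 4 * w^+2 <= 1 ->
  0 <= (1/2 + w*a*b)^+2 - 4 * (w^+2*(1-2*w^+2)*(1-a^+2)*(1-b^+2)/2) /\
  0 <= (1/2 - w*a*b)^+2 - 4 * (w^+2*(1-2*w^+2)*(1-a^+2)*(1-b^+2)/2) /\
  1 - 4 * w^+2 <= Num.sqrt ((1/2 + w*a*b)^+2 - 4 * (w^+2*(1-2*w^+2)*(1-a^+2)*(1-b^+2)/2))
                + Num.sqrt ((1/2 - w*a*b)^+2 - 4 * (w^+2*(1-2*w^+2)*(1-a^+2)*(1-b^+2)/2)).
Proof.
move=> /andP[a0 a1] /andP[b0 b1] w0 w4.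
move Ed : (w^+2*(1-2*w^+2)*(1-a^+2)*(1-b^+2)/2) => d.
have hW0 : 0 <= w^+2 by apply: sqr_ge0.
have h2W : 0 <= 1 - 2 * w^+2 by lra.
have ha2 : 0 <= 1 - a^+2.
  have : 0 <= (1-a)*(1+a) by apply: mulr_ge0; lra.
  have -> : (1-a)*(1+a) = 1 - a^+2 by ring. done.
have hb2 : 0 <= 1 - b^+2.
  have : 0 <= (1-b)*(1+b) by apply: mulr_ge0; lra.
  have -> : (1-b)*(1+b) = 1 - b^+2 by ring. done.
have d0 : 0 <= 4 * d.
  rewrite -Ed; have : 0 <= w^+2*(1-2*w^+2)*(1-a^+2)*(1-b^+2).
    by apply: mulr_ge0 => //; apply: mulr_ge0 => //; apply: mulr_ge0.
  lra.
have p1 : 0 <= (1-a)*(1+b) by apply: mulr_ge0; lra.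
have p2 : 0 <= (1+a)*(1-b) by apply: mulr_ge0; lra.
have p3 : 0 <= (1+a)*(1+b) by apply: mulr_ge0; lra.
have p4 : 0 <= (1-a)*(1-b) by apply: mulr_ge0; lra.
have ab1 : a * b <= 1.
  have e1 : (1-a)*(1+b) + (1+a)*(1-b) = 2 - 2 * (a * b) by ring. lra.
have ab2 : - 1 <= a * b.
  have e1 : (1+a)*(1+b) + (1-a)*(1-b) = 2 + 2 * (a * b) by ring. lra.
have w12 : w <= 1/2.
  have : w^+2 <= (1/2)^+2 by rewrite [(1/2)^+2]expr2; lra.
  by rewrite ler_sqr ?nnegrE //; lra.
have sq1 : 2 * (a * b) <= a^+2 + b^+2.
  have := sqr_ge0 (a - b); have -> : (a - b)^+2 = a^+2 + b^+2 - 2 * (a * b) by ring. lra.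
have sq2 : - (2 * (a * b)) <= a^+2 + b^+2.
  have := sqr_ge0 (a + b); have -> : (a + b)^+2 = a^+2 + b^+2 + 2 * (a * b) by ring. lra.
have gen : forall u, 0 <= u <= 1 -> u^+2 = (a*b)^+2 -> 2 * u <= a^+2 + b^+2 ->
    4 * d <= 2 * w^+2 * (1 - 2 * w^+2) * (1 - u)^+2.
  move=> u /andP[u0 u1] uE u2.
  have hle : (1-a^+2)*(1-b^+2) <= (1-u)^+2.
    have -> : (1-a^+2)*(1-b^+2) = 1 - (a^+2 + b^+2) + (a*b)^+2 by ring.
    have -> : (1-u)^+2 = 1 - 2 * u + u^+2 by ring.
    rewrite -uE; lra.
  rewrite -Ed.
  have : w^+2*(1-2*w^+2)*((1-a^+2)*(1-b^+2)) <= w^+2*(1-2*w^+2)*(1-u)^+2.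
    by apply: ler_wpM2l => //; apply: mulr_ge0.
  have -> : w^+2*(1-2*w^+2)*((1-a^+2)*(1-b^+2)) = w^+2*(1-2*w^+2)*(1-a^+2)*(1-b^+2) by ring.
  move=> h; have -> : 4 * (w ^+ 2 * (1 - 2 * w ^+ 2) * (1 - a ^+ 2) * (1 - b ^+ 2) / 2) = 2 * (w ^+ 2 * (1 - 2 * w ^+ 2) * (1 - a ^+ 2) * (1 - b ^+ 2)) by field; rewrite ?pnatr_eq0.
  have -> : 2 * w ^+ 2 * (1 - 2 * w ^+ 2) * (1 - u) ^+ 2 = 2 * (w ^+ 2 * (1 - 2 * w ^+ 2) * (1 - u) ^+ 2) by ring.
  lra.
have abw1 : a * b * w <= 1/2.
  have : 0 <= (1 - a * b) * w by apply: mulr_ge0; lra.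
  have -> : (1 - a * b) * w = w - a * b * w by ring. lra.
have abw2 : - (1/2) <= a * b * w.
  have : 0 <= (1 + a * b) * w by apply: mulr_ge0; lra.
  have -> : (1 + a * b) * w = w + a * b * w by ring. lra.
have -> : w * a * b = a * b * w by ring.
case: (lerP 0 (a * b)) => hab.
- have hu : 0 <= a * b <= 1 by apply/andP; split; lra.
  have [h1 h2] := @core_ineq R (a*b) w d hu w0 w4 d0 (gen _ hu erefl sq1).
  have abw0 : 0 <= a * b * w by apply: mulr_ge0.
  have hs : (1/2 - a*b*w)^+2 <= (1/2 + a*b*w)^+2.
    by rewrite ler_sqr ?nnegrE; lra.
  split; first lra.
  by split.
- have hu : 0 <= - (a * b) <= 1 by apply/andP; split; lra.
  have hu2 : (- (a * b))^+2 = (a * b)^+2 by rewrite sqrrN.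
  have hu3 : 2 * (- (a * b)) <= a^+2 + b^+2 by lra.
  have [h1 h2] := @core_ineq R (- (a*b)) w d hu w0 w4 d0 (gen _ hu hu2 hu3).
  have e1 : 1/2 + a * b * w = 1/2 - (- (a*b)) * w by rewrite mulNr opprK.
  have e2 : 1/2 - a * b * w = 1/2 + (- (a*b)) * w by rewrite mulNr.
  have abw0 : 0 <= - (a * b) * w by apply: mulr_ge0; lra.
  have hs : (1/2 - (-(a*b))*w)^+2 <= (1/2 + (-(a*b))*w)^+2.
    by rewrite ler_sqr ?nnegrE; lra.
  rewrite e1 e2; split; first exact: h1.
  split; first lra.
  by rewrite [X in _ <= X]addrC.
Qed.

Lemma ln2_gt0 (R : realType) : 0 < ln (2 : R).
Proof. by apply: ln_gt0; lra. Qed.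

Lemma gibbs_term (R : realType) (l m : R) : 0 <= l -> 0 < m ->
  etaD l <= (- (l * ln m) + m - l) * (ln 2)^-1.
Proof.
move=> l0 m0; have c0 := @ln2_gt0 R.
have ci : 0 <= (ln (2:R))^-1 by rewrite invr_ge0; lra.
rewrite /Defs.eta; case: (ltrP 0 l) => lp.
- have -> : - (l * ln l / ln 2) = (- (l * ln l)) * (ln 2)^-1 by rewrite mulNr.
  apply: ler_wpM2r => //.
  have ml : 0 < m / l by apply: divr_gt0.
  have h := @le_ln1Dx R (m / l - 1) ltac:(lra).
  have e : 1 + (m / l - 1) = m / l by ring.
  rewrite e ln_div ?posrE // in h.
  have : l * (ln m - ln l) <= l * (m / l - 1) by apply: ler_wpM2l; lra.
  have -> : l * (m / l - 1) = m - l by field; apply/eqP; lra.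
  lra.
- have l00 : l = 0 by apply/eqP; rewrite eq_le l0 lp.
  rewrite l00 mul0r oppr0 add0r; apply: mulr_ge0 => //; lra.
Qed.

Lemma ent_bound (R : realType) (l1 l2 l3 l4 P Q : R) :
  0 <= l1 -> 0 <= l2 -> 0 <= l3 -> 0 <= l4 -> l1 + l2 + l3 + l4 = 1 ->
  0 < Q -> Q <= P -> 2 * P + 2 * Q = 1 -> 2 * P <= l1 + l3 ->
  etaD l1 + etaD l2 + etaD l3 + etaD l4 <= etaD P + etaD P + etaD Q + etaD Q.
Proof.
move=> h1 h2 h3 h4 hs Q0 QP PQ1 hL.
have P0 : 0 < P by lra.
have c0 := @ln2_gt0 R.
have ci : 0 <= (ln (2:R))^-1 by rewrite invr_ge0; lra.
have g1 := gibbs_term h1 P0.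
have g2 := gibbs_term h2 Q0.
have g3 := gibbs_term h3 P0.
have g4 := gibbs_term h4 Q0.
have eP : etaD P = (- (P * ln P)) * (ln 2)^-1 by rewrite /Defs.eta P0 mulNr.
have eQ : etaD Q = (- (Q * ln Q)) * (ln 2)^-1 by rewrite /Defs.eta Q0 mulNr.
rewrite eP eQ.
set c := (ln (2:R))^-1 in ci g1 g2 g3 g4 *.
have lnPQ : ln Q <= ln P by rewrite ler_ln ?posrE.
have key : (- (l1 * ln P) + P - l1) + (- (l2 * ln Q) + Q - l2) + (- (l3 * ln P) + P - l3)
   + (- (l4 * ln Q) + Q - l4) <= - (P * ln P) + - (P * ln P) + - (Q * ln Q) + - (Q * ln Q).
  have := mulr_ge0 (x := l1 + l3 - 2 * P) (y := ln P - ln Q) ltac:(lra) ltac:(lra).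
  have e : l2 + l4 = 1 - (l1 + l3) by lra.
  have f1 : l2 * ln Q + l4 * ln Q = ln Q - l1 * ln Q - l3 * ln Q.
    have -> : l2 * ln Q + l4 * ln Q = (l2 + l4) * ln Q by ring.
    rewrite e; ring.
  have f2 : 2 * (Q * ln Q) = ln Q - 2 * (P * ln Q).
    have -> : 2 * (Q * ln Q) = (2 * Q) * ln Q by ring.
    rewrite (_ : 2 * Q = 1 - 2 * P); [ring | lra].
  lra.
have := ler_wpM2r ci key.
rewrite !mulrDl.
lra.
Qed.

Lemma EntE (R : realType) (x y al be : R) : sin x = cos x ->
  0 <= (t1f x y al be)^+2 - 4 * df x y al be ->
  0 <= (t2f x y al be)^+2 - 4 * df x y al be ->
  Ent x y y al be =
    etaD ((t1f x y al be + Num.sqrt ((t1f x y al be)^+2 - 4 * df x y al be)) / 2)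
  + etaD ((t1f x y al be - Num.sqrt ((t1f x y al be)^+2 - 4 * df x y al be)) / 2)
  + etaD ((t2f x y al be + Num.sqrt ((t2f x y al be)^+2 - 4 * df x y al be)) / 2)
  + etaD ((t2f x y al be - Num.sqrt ((t2f x y al be)^+2 - 4 * df x y al be)) / 2).
Proof.
move=> hx h1 h2.
have hT1 := T1E y al be hx; have hD1 := D1E y al be hx.
have hT2 := T2E y al be hx; have hD2 := D2E y al be hx.
move: h1 h2 hT1 hD1 hT2 hD2.
set t1 := t1f x y al be; set t2 := t2f x y al be; set d := df x y al be.
move=> h1 h2 hT1 hD1 hT2 hD2.
set s1 := Num.sqrt (t1^+2 - 4 * d); set s2 := Num.sqrt (t2^+2 - 4 * d).
have hs1 : s1^+2 = t1^+2 - 4 * d by rewrite sqr_sqrtr.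
have hs2 : s2^+2 = t2^+2 - 4 * d by rewrite sqr_sqrtr.
have hcp : char_poly (rhoA x y y al be) = \prod_(l <- [:: Complex ((t1 + s1)/2) 0;
     Complex ((t1 - s1)/2) 0; Complex ((t2 + s2)/2) 0; Complex ((t2 - s2)/2) 0]) ('X - l%:P).
  rewrite charpolyE !big_cons big_nil mulr1 mulrA.
  rewrite (@quad _ _ _ _ _ (Complex ((t1 + s1)/2) 0) (Complex ((t1 - s1)/2) 0)).
  rewrite (@quad _ _ _ _ _ (Complex ((t2 + s2)/2) 0) (Complex ((t2 - s2)/2) 0)) //.
  - rewrite /gN hT2; simpc; congr Complex; by field; rewrite ?pnatr_eq0.
  - rewrite /gN hD2; simpc; congr Complex.
    have -> : (t2 + s2) / 2 * ((t2 - s2) / 2) = (t2^+2 - s2^+2) / 4 by field; rewrite ?pnatr_eq0.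
    by rewrite hs2; field; rewrite ?pnatr_eq0.
  - rewrite /gN hT1; simpc; congr Complex; by field; rewrite ?pnatr_eq0.
  - rewrite /gN hD1; simpc; congr Complex.
    have -> : (t1 + s1) / 2 * ((t1 - s1) / 2) = (t1^+2 - s1^+2) / 4 by field; rewrite ?pnatr_eq0.
    by rewrite hs1; field; rewrite ?pnatr_eq0.
rewrite /Ent /vN_entropy (perm_big _ (spectrum_perm hcp)) !big_cons big_nil /=.
by rewrite addr0 !addrA.
Qed.

Lemma sin_cos_pi4 (R : realType) : sin (pi / 4 : R) = cos (pi / 4).
Proof.
rewrite -cosBpihalf (_ : pi / 4 - pi / 2 = - (pi / 4)) ?cosN //.
by field; rewrite ?pnatr_eq0.
Qed.

Lemma cos_pi4_sq (R : realType) : cos (pi / 4 : R) ^+ 2 = 1 / 2.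
Proof.
have := cos2Dsin2 (pi / 4 : R); rewrite sin_cos_pi4 => h.
have -> : cos (pi / 4 : R) ^+ 2 = (cos (pi / 4) ^+ 2 + cos (pi / 4) ^+ 2) / 2.
  by field; rewrite ?pnatr_eq0.
by rewrite h.
Qed.

Lemma CSp (R : realType) (y : R) : (cos y + sin y)^+2 = 1 + 2 * (sin y * cos y).
Proof.
have h := cos2Dsin2 y; apply/eqP; rewrite -subr_eq0; apply/eqP.
have -> : (cos y + sin y)^+2 - (1 + 2 * (sin y * cos y)) = cos y ^+ 2 + sin y ^+ 2 - 1 by ring.
by rewrite h subrr.
Qed.
Lemma CSm (R : realType) (y : R) : (cos y - sin y)^+2 = 1 - 2 * (sin y * cos y).
Proof.
have h := cos2Dsin2 y; apply/eqP; rewrite -subr_eq0; apply/eqP.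
have -> : (cos y - sin y)^+2 - (1 - 2 * (sin y * cos y)) = cos y ^+ 2 + sin y ^+ 2 - 1 by ring.
by rewrite h subrr.
Qed.
Lemma CS4 (R : realType) (y : R) : cos y ^+ 4 + sin y ^+ 4 = 1 - 2 * (sin y * cos y)^+2.
Proof.
have := cos2Dsin2 y; move=> h.
have -> : cos y ^+ 4 + sin y ^+ 4 = (cos y ^+ 2 + sin y ^+ 2)^+2 - 2 * (sin y * cos y)^+2 by ring.
by rewrite h expr1n.
Qed.

Lemma t1_clean (R : realType) (x y al be : R) : cos x ^+ 2 = 1 / 2 ->
  t1f x y al be = 1/2 + (sin y * cos y) * (cos al ^+ 2 - sin al ^+ 2) * (cos be ^+ 2 - sin be ^+ 2).
Proof.
move=> hk; rewrite /t1f hk CSp CSm cos2Dsin2 !sin2cos2.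
by field; rewrite ?pnatr_eq0.
Qed.

Lemma t2_clean (R : realType) (x y al be : R) : cos x ^+ 2 = 1 / 2 ->
  t2f x y al be = 1/2 - (sin y * cos y) * (cos al ^+ 2 - sin al ^+ 2) * (cos be ^+ 2 - sin be ^+ 2).
Proof.
move=> hk; rewrite /t2f hk CSp CSm cos2Dsin2 !sin2cos2.
by field; rewrite ?pnatr_eq0.
Qed.

Lemma d_clean (R : realType) (x y al be : R) : cos x ^+ 2 = 1 / 2 ->
  df x y al be = let w := sin y * cos y in
   let a := cos al ^+ 2 - sin al ^+ 2 in let b := cos be ^+ 2 - sin be ^+ 2 in
   w^+2*(1-2*w^+2)*(1-a^+2)*(1-b^+2)/2.
Proof.
move=> hk; rewrite /df /=.
have hk4 : cos x ^+ 4 = 1 / 4.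
  have -> : cos x ^+ 4 = (cos x ^+ 2) ^+ 2 by rewrite -exprM.
  by rewrite hk; field; rewrite ?pnatr_eq0.
have eSC : sin y ^+ 2 * cos y ^+ 2 = (sin y * cos y) ^+ 2 by rewrite exprMn.
rewrite hk4 eSC CS4 !sin2cos2.
by field; rewrite ?pnatr_eq0.
Qed.

Lemma key_aux (R : realType) (a b w : R) :
  -1 <= a <= 1 -> -1 <= b <= 1 -> 0 <= w -> 4 * w^+2 <= 1 ->
  0 <= w^+2*(1-2*w^+2)*(1-a^+2)*(1-b^+2)/2 /\ 0 <= 1/2 + w*a*b /\ 0 <= 1/2 - w*a*b.
Proof.
move=> /andP[a0 a1] /andP[b0 b1] w0 w4.
have hW0 : 0 <= w^+2 by apply: sqr_ge0.
have h2W : 0 <= 1 - 2 * w^+2 by lra.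
have ha2 : 0 <= 1 - a^+2.
  have : 0 <= (1-a)*(1+a) by apply: mulr_ge0; lra.
  have -> : (1-a)*(1+a) = 1 - a^+2 by ring. done.
have hb2 : 0 <= 1 - b^+2.
  have : 0 <= (1-b)*(1+b) by apply: mulr_ge0; lra.
  have -> : (1-b)*(1+b) = 1 - b^+2 by ring. done.
have p1 : 0 <= (1-a)*(1+b) by apply: mulr_ge0; lra.
have p2 : 0 <= (1+a)*(1-b) by apply: mulr_ge0; lra.
have p3 : 0 <= (1+a)*(1+b) by apply: mulr_ge0; lra.
have p4 : 0 <= (1-a)*(1-b) by apply: mulr_ge0; lra.
have ab1 : a * b <= 1.
  have e1 : (1-a)*(1+b) + (1+a)*(1-b) = 2 - 2 * (a * b) by ring. lra.
have ab2 : - 1 <= a * b.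
  have e1 : (1+a)*(1+b) + (1-a)*(1-b) = 2 + 2 * (a * b) by ring. lra.
have w12 : w <= 1/2.
  have : w^+2 <= (1/2)^+2 by rewrite [(1/2)^+2]expr2; lra.
  by rewrite ler_sqr ?nnegrE //; lra.
have abw1 : a * b * w <= 1/2.
  have : 0 <= (1 - a * b) * w by apply: mulr_ge0; lra.
  have -> : (1 - a * b) * w = w - a * b * w by ring. lra.
have abw2 : - (1/2) <= a * b * w.
  have : 0 <= (1 + a * b) * w by apply: mulr_ge0; lra.
  have -> : (1 + a * b) * w = w + a * b * w by ring. lra.
have -> : w * a * b = a * b * w by ring.
split; last by split; lra.
apply: divr_ge0; last by lra.
by apply: mulr_ge0 => //; apply: mulr_ge0 => //; apply: mulr_ge0.
Qed.

Lemma at_pi4 (R : realType) (w : R) : 0 <= w -> 4 * w^+2 <= 1 ->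
  let d := w^+2*(1-2*w^+2)*(1-0^+2)*(1-0^+2)/2 in
  (1/2 + w*0*0 + Num.sqrt ((1/2 + w*0*0)^+2 - 4 * d)) / 2 = (1 - 2 * w^+2) / 2 /\
  (1/2 + w*0*0 - Num.sqrt ((1/2 + w*0*0)^+2 - 4 * d)) / 2 = w^+2 /\
  (1/2 - w*0*0 + Num.sqrt ((1/2 - w*0*0)^+2 - 4 * d)) / 2 = (1 - 2 * w^+2) / 2 /\
  (1/2 - w*0*0 - Num.sqrt ((1/2 - w*0*0)^+2 - 4 * d)) / 2 = w^+2.
Proof.
move=> w0 w4 d.
have e1 : 1/2 + w*0*0 = 1/2 :> R by rewrite !mulr0 addr0.
have e2 : 1/2 - w*0*0 = 1/2 :> R by rewrite !mulr0 subr0.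
have e3 : (1/2 : R)^+2 - 4 * d = (1/2 - 2 * w^+2)^+2.
  by rewrite /d expr0n /= subr0; field; rewrite ?pnatr_eq0.
have e4 : Num.sqrt ((1/2 - 2 * w^+2)^+2) = 1/2 - 2 * w^+2 :> R.
  by rewrite sqrtr_sqr ger0_norm //; lra.
rewrite e1 e2 e3 e4; split; [|split; [|split]]; by field; rewrite ?pnatr_eq0.
Qed.


End Aux.
Import Aux.
Unset Implicit Arguments.
Local Notation etaD := Pilot.Defs.eta.

Theorem proposition3 (R : realType) (x y z : R) :
  normalized x y z -> x = pi / 4 -> y = z ->
  (forall al be : R, 0 <= al <= pi / 4 -> 0 <= be <= pi / 2 ->
     Ent x y z al be <= Ent x y z (pi / 4) (pi / 4)) /\
  Ent x y z (pi / 4) (pi / 4) =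
    shannon [:: Normc.normc (coef_c x y z 0) ^+ 2; Normc.normc (coef_c x y z 0) ^+ 2;
                Normc.normc (coef_c x y z 2) ^+ 2; Normc.normc (coef_c x y z 2) ^+ 2].
Proof.
move=> [_ [_ [_ [_ [hy0 hy4]]]]] hx hyz.
subst z.
have hsx : sin x = cos x by rewrite hx sin_cos_pi4.
have hk : cos x ^+ 2 = 1/2 by rewrite hx cos_pi4_sq.
have pi0 : 0 < (pi : R) := pi_gt0 R.
have sy : 0 < sin y by apply: sin_gt0_pi; apply/andP; split; lra.
have cy : 0 < cos y by apply: cos_gt0_pihalf; apply/andP; split; lra.
have w0 : 0 < sin y * cos y by apply: mulr_gt0.
have w4 : 4 * (sin y * cos y)^+2 <= 1.
  have h := cos2Dsin2 y.
  have e : 4 * (sin y * cos y)^+2 = (cos y ^+2 + sin y^+2)^+2 - (cos y^+2 - sin y^+2)^+2 by ring.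
  rewrite e h expr1n; have := sqr_ge0 (cos y^+2 - sin y^+2); lra.
set w := sin y * cos y in w0 w4.
have bnd : forall t : R, -1 <= cos t ^+ 2 - sin t ^+ 2 <= 1.
  move=> t; have := cos2Dsin2 t; have := sqr_ge0 (cos t); have := sqr_ge0 (sin t).
  by move=> *; apply/andP; split; lra.
have EC : forall al be : R,
  let a := cos al ^+ 2 - sin al ^+ 2 in let b := cos be ^+ 2 - sin be ^+ 2 in
  let d := w^+2*(1-2*w^+2)*(1-a^+2)*(1-b^+2)/2 in
  Ent x y y al be =
    etaD ((1/2 + w*a*b + Num.sqrt ((1/2 + w*a*b)^+2 - 4 * d)) / 2)
  + etaD ((1/2 + w*a*b - Num.sqrt ((1/2 + w*a*b)^+2 - 4 * d)) / 2)
  + etaD ((1/2 - w*a*b + Num.sqrt ((1/2 - w*a*b)^+2 - 4 * d)) / 2)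
  + etaD ((1/2 - w*a*b - Num.sqrt ((1/2 - w*a*b)^+2 - 4 * d)) / 2).
  move=> al be a b d.
  have [k1 [k2 _]] := key_ineq (bnd al) (bnd be) (ltW w0) w4.
  by rewrite EntE // ?t1_clean ?t2_clean ?d_clean.
have hpi4 : cos (pi / 4 : R) ^+ 2 - sin (pi / 4) ^+ 2 = 0 by rewrite sin_cos_pi4 subrr.
have [q1 [q2 [q3 q4]]] := at_pi4 (ltW w0) w4.
have E0 : Ent x y y (pi / 4) (pi / 4) = etaD ((1 - 2 * w^+2) / 2) + etaD (w^+2)
     + etaD ((1 - 2 * w^+2) / 2) + etaD (w^+2).
  by rewrite EC /= hpi4 q1 q2 q3 q4.
have P0 : Normc.normc (coef_c x y y 0) ^+ 2 = (1 - 2 * w^+2) / 2.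
  rewrite /coef_c /= sqr_sqrtr; last by apply: addr_ge0; apply: sqr_ge0.
  rewrite hsx.
  have -> : (cos x * cos y * cos y) ^+ 2 + (cos x * sin y * sin y) ^+ 2 =
     cos x ^+ 2 * (cos y ^+ 4 + sin y ^+ 4) by ring.
  by rewrite hk CS4 -/w; field; rewrite ?pnatr_eq0.
have Q0 : Normc.normc (coef_c x y y 2) ^+ 2 = w^+2.
  rewrite /coef_c /= sqr_sqrtr; last by apply: addr_ge0; apply: sqr_ge0.
  rewrite hsx.
  have -> : (cos x * cos y * sin y) ^+ 2 + (cos x * sin y * cos y) ^+ 2 =
     2 * cos x ^+ 2 * (sin y * cos y) ^+ 2 by ring.
  by rewrite hk -/w; field; rewrite ?pnatr_eq0.
split; last first.
  rewrite E0 P0 Q0 /shannon !big_cons big_nil addr0.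
  lra.
move=> al be _ _.
rewrite E0 EC /=.
set a := cos al ^+ 2 - sin al ^+ 2; set b := cos be ^+ 2 - sin be ^+ 2.
have [k1 [k2 k3]] := key_ineq (bnd al) (bnd be) (ltW w0) w4.
have [d0 [t10 t20]] := key_aux (bnd al) (bnd be) (ltW w0) w4.
rewrite -/a -/b in k1 k2 k3 d0 t10 t20.
set d := w^+2*(1-2*w^+2)*(1-a^+2)*(1-b^+2)/2 in k1 k2 k3 d0 *.
set t1 := 1/2 + w*a*b in k1 k2 k3 t10 *.
set t2 := 1/2 - w*a*b in k1 k2 k3 t20 *.
set s1 := Num.sqrt (t1^+2 - 4 * d) in k3 *.
set s2 := Num.sqrt (t2^+2 - 4 * d) in k3 *.
have s10 : 0 <= s1 := sqrtr_ge0 _.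
have s20 : 0 <= s2 := sqrtr_ge0 _.
have s1t : s1 <= t1.
  have h : s1^+2 <= t1^+2 by rewrite /s1 sqr_sqrtr //; lra.
  by move: h; rewrite ler_sqr ?nnegrE.
have s2t : s2 <= t2.
  have h : s2^+2 <= t2^+2 by rewrite /s2 sqr_sqrtr //; lra.
  by move: h; rewrite ler_sqr ?nnegrE.
have Wp : 0 < w^+2 by apply: exprn_gt0.
have := @ent_bound R ((t1 + s1)/2) ((t1 - s1)/2) ((t2 + s2)/2) ((t2 - s2)/2)
  ((1 - 2 * w^+2) / 2) (w^+2) ltac:(lra) ltac:(lra) ltac:(lra) ltac:(lra)
  ltac:(rewrite /t1 /t2; lra) Wp ltac:(lra) ltac:(lra) ltac:(rewrite /t1 /t2; lra).
lra.
Qed.
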